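(* Let $A\subseteq B$ be commutative semirings, $S=A[x_1,\dots,x_n]$, $\rho$ a congruence on $B$, and $\sigma$ a congruence on $S$. Then $(\sqrt{\sigma/\rho})^{c}\subseteq(\sqrt{\rho})_B(Z_\rho(\sigma)(B))$.
   Context: Semirings are commutative with $0$ and $1\neq0$, $0a=0$; congruences are equivalence relations compatible with $+$ and $\cdot$. Twisted product: $(a,b)\ast(c,d)=(ac+bd,ad+bc)$, with $(a,b)^{\ast1}=(a,b)$ and $(a,b)^{\ast n}=(a,b)^{\ast(n-1)}\ast(a,b)$. For a congruence $\theta$ on a semiring $R$, $\sqrt{\theta}=\{(a,b)\in R\times R:\ (a+c,b+c)^{\ast n}\in\theta\ \text{for some}\ c\in R,\ n\geq1\}$. For $Y\subseteq B^n$ and a congruence $\theta$ on $B$, $\theta_B(Y)=\{(f,g)\in S\times S: (f(P),g(P))\in\theta\ \forall P\in Y\}$; $Z_\rho(\sigma)(B)=\{P\in B^n:(f(P),g(P))\in\rho\ \forall(f,g)\in\sigma\}$. For $f=\sum a_{i_1\cdots i_n}x_1^{i_1}\cdots x_n^{i_n}$, $g=\sum b_{i_1\cdots i_n}x_1^{i_1}\cdots x_n^{i_n}$ in $S$ and a congruence $\theta$ on $B$, write $f\equiv g\pmod\theta$ if $(a_{i_1\cdots i_n},b_{i_1\cdots i_n})\in\theta$ for all multi-indices. Define $\sqrt{\sigma/\rho}=\{(f_1,f_2)\in S\times S:\ \exists (g_1,g_2)\in\sqrt{\sigma}$ with $f_i\equiv g_i \pmod{\sqrt\rho}$, $i=1,2\}$,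 and $(\sqrt{\sigma/\rho})^{c}$ is the congruence on $S$ generated by this relation. *)

(* Defs.v *)
(* commutative semirings = comNzSemiRingType; polynomials over
   a semiring are finitely supported coefficient functions (finmap fsfun). *)
From HB Require Import structures.
From mathcomp Require Import all_boot all_order all_algebra.
From mathcomp Require Import finmap.
Set Implicit Arguments. Unset Strict Implicit. Unset Printing Implicit Defensive.
Import Order.TTheory GRing.Theory.
Local Open Scope fset_scope.
Local Open Scope ring_scope.

Section Generic.
Variables (T : Type) (add mul : T -> T -> T).

Definition is_congr (r : T -> T -> Prop) : Prop :=
  [/\ (forall a, r a a), (forall a b, r a b -> r b a),
      (forall a b c, r a b -> r b c -> r a c),
      (forall a b c d, r a b -> r c d -> r (add a c) (add b d)) &
      (forall a b c d, r a b -> r c d -> r (mul a c) (mul b d))].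

Definition twist (x y : T * T) : T * T :=
  (add (mul x.1 y.1) (mul x.2 y.2), add (mul x.1 y.2) (mul x.2 y.1)).

(* twisted power, meaningful for n >= 1: x^{*1} = x, x^{*n} = x^{*(n-1)} * x *)
Fixpoint twpow (x : T * T) (n : nat) : T * T :=
  match n with
  | 0 | 1 => x
  | k.+1 => twist (twpow x k) x
  end.

Definition crad (theta : T -> T -> Prop) (a b : T) : Prop :=
  exists c n, (1 <= n)%N /\
    let p := twpow (add a c, add b c) n in theta p.1 p.2.

Definition congr_gen (R : T -> T -> Prop) (x y : T) : Prop :=
  forall c, is_congr c -> (forall u v, R u v -> c u v) -> c x y.
End Generic.

Definition mon (n : nat) := {ffun 'I_n -> nat}.
Definition monadd n (m1 m2 : mon n) : mon n := [ffun i => (m1 i + m2 i)%N].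

Definition spoly (A : comNzSemiRingType) (n : nat) := {fsfun mon n -> A with 0}.

Section Poly.
Variables (A : comNzSemiRingType) (n : nat).
Implicit Types p q : spoly A n.

Definition padd p q : spoly A n :=
  [fsfun m in finsupp p `|` finsupp q => p m + q m].

Definition pmul p q : spoly A n :=
  [fsfun m in [fset monadd m1 m2 | m1 in finsupp p, m2 in finsupp q] =>
     \sum_(m1 <- finsupp p) \sum_(m2 <- finsupp q | monadd m1 m2 == m)
        p m1 * q m2].
End Poly.

Section Eval.
Variables (A B : comNzSemiRingType) (iota : {rmorphism A -> B}) (n : nat).

Definition peval (f : spoly A n) (P : 'I_n -> B) : B :=
  \sum_(m <- finsupp f) iota (f m) * \prod_(i < n) P i ^+ m i.

Definition thetaB (theta : B -> B -> Prop) (Y : ('I_n -> B) -> Prop)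
  (f g : spoly A n) : Prop :=
  forall P, Y P -> theta (peval f P) (peval g P).

Definition Zvar (rho : B -> B -> Prop) (sigma : spoly A n -> spoly A n -> Prop)
  (P : 'I_n -> B) : Prop :=
  forall f g, sigma f g -> rho (peval f P) (peval g P).

Definition coef_congr (theta : B -> B -> Prop) (f g : spoly A n) : Prop :=
  forall m : mon n, theta (iota (f m)) (iota (g m)).

Definition rad_quot (sigma : spoly A n -> spoly A n -> Prop)
  (rho : B -> B -> Prop) (f1 f2 : spoly A n) : Prop :=
  exists g1 g2, crad (@padd A n) (@pmul A n) sigma g1 g2 /\
    coef_congr (crad +%R *%R rho) f1 g1 /\ coef_congr (crad +%R *%R rho) f2 g2.
End Eval.

(* Main.v *)
Require Import Defs.
From HB Require Import structures.
From mathcomp Require Import all_boot all_order all_algebra.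
From mathcomp Require Import finmap.
From mathcomp Require Import ring zify.
Set Implicit Arguments. Unset Strict Implicit. Unset Printing Implicit Defensive.
Import GRing.Theory.
Local Open Scope ring_scope.

Section Tw.
Variable B : comNzSemiRingType.
Definition tw := (B * B)%type.
HB.instance Definition _ := GRing.Nmodule.on tw.
Definition twone : tw := (1, 0).
Definition twmul (x y : tw) : tw := twist +%R *%R x y.
Lemma twaddE (x y : tw) : x + y = (x.1 + y.1, x.2 + y.2).
Proof. by []. Qed.
Lemma tw0E : (0 : tw) = (0, 0). Proof. by []. Qed.
Lemma twmulA : associative twmul.
Proof. by case=> a b [c d] [e f]; rewrite /twmul /twist /=; congr pair; ring. Qed.
Lemma twmulC : commutative twmul.
Proof. by case=> a b [c d]; rewrite /twmul /twist /=; congr pair; ring. Qed.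
Lemma twmul1 : left_id twone twmul.
Proof. by case=> a b; rewrite /twmul /twist /=; congr pair; ring. Qed.
Lemma twmulDl : left_distributive twmul +%R.
Proof. by case=> a b [c d] [e f]; rewrite /twmul !twaddE /twist /=; congr pair; ring. Qed.
Lemma twmul0 : left_zero (0 : tw) twmul.
Proof. by case=> a b; rewrite tw0E /twmul /twist /=; congr pair; ring. Qed.
HB.instance Definition _ := GRing.Nmodule_isComPzSemiRing.Build tw
  twmulA twmulC twmul1 twmulDl twmul0.

Lemma twmulE (x y : tw) : x * y = twist +%R *%R x y. Proof. by []. Qed.

Lemma twpowE (x : tw) k : twpow +%R *%R x k.+1 = x ^+ k.+1.
Proof.
elim: k => [|k IH]; first by rewrite expr1.
by rewrite exprSr -IH.
Qed.

Variable rho : B -> B -> Prop.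
Hypothesis Hr : is_congr +%R *%R rho.
Definition I (x : tw) := rho x.1 x.2.

Lemma I0 : I 0. Proof. by case: Hr => r _ _ _ _; apply: r. Qed.
Lemma ID x y : I x -> I y -> I (x + y).
Proof. by case: Hr => _ _ _ a _; apply: a. Qed.
Lemma IM x y : I x -> I (x * y).
Proof.
case: Hr => r s t a m; case: x y => [a1 a2] [b1 b2]; rewrite /I /= => h.
apply: (t _ (a2 * b1 + a1 * b2)).
  apply: a; apply: m => //; first [exact: r | exact: s | idtac].
by rewrite addrC; apply: r.
Qed.
Lemma IMl x y : I y -> I (x * y).
Proof. by rewrite mulrC; apply: IM. Qed.
Lemma Inat x k : I x -> I (x *+ k).
Proof. by move=> h; elim: k => [|k IH]; [exact: I0 | rewrite mulrS; apply: ID]. Qed.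

Lemma pow_sum (x y : tw) n m : I (x ^+ n.+1) -> I (y ^+ m.+1) ->
  I ((x + y) ^+ (n + m).+1).
Proof.
move=> hx hy; rewrite exprDn.
apply: (big_ind I I0 ID) => i _; apply: Inat.
case: (leqP (m.+1) i) => hi.
  have -> : y ^+ i = y ^+ m.+1 * y ^+ (i - m.+1) by rewrite -exprD subnKC.
  by rewrite mulrCA; apply: IM.
have -> : ((n + m).+1 - i = n.+1 + (m - i))%N by lia.
by rewrite exprD -mulrA; apply: IM.
Qed.

Lemma crad_tw a b : crad +%R *%R rho a b <->
  exists c k, I (((a + c, b + c) : tw) ^+ k.+1).
Proof.
split.
  case=> c [[|k]] [//] /= h; exists c, k; by rewrite -twpowE.
case=> c [k h]; exists c, k.+1; split => //; by rewrite twpowE.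
Qed.

Definition swp (x : tw) : tw := (x.2, x.1).
Lemma swpM x y : swp x * y = swp (x * y).
Proof. by case: x y => [a b] [c d]; rewrite /swp !twmulE /twist /=; congr pair; ring. Qed.
Lemma swpMM x y : swp x * swp y = x * y.
Proof. by case: x y => [a b] [c d]; rewrite /swp !twmulE /twist /=; congr pair; ring. Qed.
Lemma swp_pow x k : swp x ^+ k.+1 = x ^+ k.+1 \/ swp x ^+ k.+1 = swp (x ^+ k.+1).
Proof.
elim: k => [|k [IH|IH]]; first by right; rewrite !expr1.
  by right; rewrite exprSr IH mulrC swpM -exprS.
by left; rewrite exprSr IH swpMM -exprSr.
Qed.
Lemma Iswp x : I x -> I (swp x).
Proof. by case: Hr => _ s _ _ _; case: x => a b; rewrite /I /=; apply: s. Qed.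

Lemma crad_congr : is_congr +%R *%R (crad +%R *%R rho).
Proof.
have trans : forall a b c, crad +%R *%R rho a b -> crad +%R *%R rho b c ->
    crad +%R *%R rho a c.
  move=> a b c /crad_tw [e [k h1]] /crad_tw [f [l h2]]; apply/crad_tw.
  exists (e + b + f), (k + l); have := pow_sum h1 h2.
  by rewrite twaddE /=; congr (I (_ ^+ _)); congr pair; ring.
have scal : forall a b e, crad +%R *%R rho a b -> crad +%R *%R rho (a * e) (b * e).
  move=> a b e /crad_tw [c [k h]]; apply/crad_tw; exists (c * e), k.
  have := IM (((e, 0) : tw) ^+ k.+1) h; rewrite -exprMn twmulE /twist /=.
  by congr (I (_ ^+ _)); congr pair; ring.
split.
- by move=> a; apply/crad_tw; exists 0, 0; rewrite expr1; case: Hr => r _ _ _ _; apply: r.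
- move=> a b /crad_tw [c [k h]]; apply/crad_tw; exists c, k.
  have -> : ((b + c, a + c) : tw) = swp (a + c, b + c) by [].
  by case: (swp_pow (a + c, b + c) k) => ->; last apply: Iswp.
- exact: trans.
- move=> a b c d /crad_tw [e [k h1]] /crad_tw [f [l h2]]; apply/crad_tw.
  exists (e + f), (k + l); have := pow_sum h1 h2.
  by rewrite twaddE /=; congr (I (_ ^+ _)); congr pair; ring.
- move=> a b c d h1 h2; apply: (trans _ (b * c)); first exact: scal.
  by rewrite mulrC (mulrC b); apply: scal.
Qed.
End Tw.
Section PE.
Local Open Scope fset_scope.
Local Open Scope ring_scope.
Variables (A B : comNzSemiRingType) (iota : {rmorphism A -> B}) (n : nat).
Variable P : 'I_n -> B.
Definition mono (m : mon n) : B := \prod_(i < n) P i ^+ m i.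
Definition pe (f : spoly A n) := peval iota f P.

Lemma pe_incl (f : spoly A n) (s : {fset mon n}) : finsupp f `<=` s ->
  pe f = \sum_(m <- s) iota (f m) * mono m.
Proof.
move=> hs; rewrite /pe /peval; apply: big_fset_incl => // m _ hm.
by move: hm; rewrite memNfinsupp => /eqP ->; rewrite rmorph0 mul0r.
Qed.

Lemma paddE (p q : spoly A n) m : padd p q m = p m + q m.
Proof.
rewrite /padd fsfunE; case: ifP => // /negbT.
rewrite inE negb_or !memNfinsupp => /andP [/eqP -> /eqP ->].
by rewrite addr0.
Qed.

Lemma pe_add p q : pe (padd p q) = pe p + pe q.
Proof.
rewrite (pe_incl (f := padd p q) (s := finsupp p `|` finsupp q)); last first.
  apply/fsubsetP => m; rewrite mem_finsupp paddE inE !mem_finsupp.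
  by apply: contraR; rewrite negb_or !negbK => /andP [/eqP -> /eqP ->]; rewrite addr0.
rewrite (pe_incl (f := p) (s := finsupp p `|` finsupp q)) ?fsubsetUl //.
rewrite (pe_incl (f := q) (s := finsupp p `|` finsupp q)) ?fsubsetUr //.
by rewrite -big_split /=; apply: eq_bigr => m _; rewrite paddE rmorphD mulrDl.
Qed.

Lemma monoD m1 m2 : mono (monadd m1 m2) = mono m1 * mono m2.
Proof.
by rewrite /mono -big_split /=; apply: eq_bigr => i _; rewrite ffunE exprD.
Qed.

Lemma pe_mul p q : pe (pmul p q) = pe p * pe q.
Proof.
set S := [fset monadd m1 m2 | m1 in finsupp p, m2 in finsupp q].
have E : forall m, pmul p q m = \sum_(m1 <- finsupp p) \sum_(m2 <- finsupp q | monadd m1 m2 == m)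
        p m1 * q m2.
  move=> m; rewrite /pmul fsfunE; case: ifP => // /negbT hm.
  rewrite big1_seq // => m1 /andP [_ h1]; rewrite big1_seq // => m2 /andP [/eqP e h2].
  by case/negP: hm; rewrite -e; apply/imfset2P; exists m1 => //; exists m2.
rewrite (pe_incl (s := S)); last first.
  apply/fsubsetP => m; rewrite mem_finsupp; apply: contraR => hm.
  rewrite E big1_seq // => m1 /andP [_ h1]; rewrite big1_seq // => m2 /andP [/eqP e h2].
  by case/negP: hm; rewrite -e; apply/imfset2P; exists m1 => //; exists m2.
under eq_bigr => m _ do rewrite E rmorph_sum mulr_suml.
rewrite exchange_big /= /pe /peval mulr_suml; rewrite big_seq [in RHS]big_seq; apply: eq_bigr => m1 h1.
under eq_bigr => m _ do rewrite rmorph_sum mulr_suml big_mkcond /=.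
rewrite exchange_big /= mulr_sumr big_seq [in RHS]big_seq; apply: eq_bigr => m2 h2.
rewrite -big_mkcond /=.
rewrite (eq_bigl (pred1 (monadd m1 m2))); last by move=> m /=; rewrite eq_sym.
rewrite -big_filter filter_pred1_uniq ?fset_uniq //; last first.
  by apply/imfset2P; exists m1 => //; exists m2.
rewrite big_seq1 rmorphM monoD; rewrite /mono; ring.
Qed.

Lemma pe_twist (x y : spoly A n * spoly A n) :
  let z := twist (@padd A n) (@pmul A n) x y in
  (pe z.1, pe z.2) = twist +%R *%R (pe x.1, pe x.2) (pe y.1, pe y.2).
Proof. by rewrite /twist /= !pe_add !pe_mul. Qed.

Lemma pe_twpow (x : spoly A n * spoly A n) k :
  (pe (twpow (@padd A n) (@pmul A n) x k.+1).1, pe (twpow (@padd A n) (@pmul A n) x k.+1).2)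
  = twpow +%R *%R (pe x.1, pe x.2) k.+1.
Proof.
elim: k => [|k IH] //=.
by have := pe_twist (twpow (@padd A n) (@pmul A n) x k.+1) x; rewrite /= IH.
Qed.

Lemma big_congr (R : B -> B -> Prop) (s : seq (mon n)) F G :
  is_congr +%R *%R R -> (forall m, R (F m) (G m)) ->
  R (\sum_(m <- s) F m) (\sum_(m <- s) G m).
Proof.
case=> r _ _ a _ h; elim: s => [|x s IH]; first by rewrite !big_nil.
by rewrite !big_cons; apply: a.
Qed.

Lemma pe_coef (R : B -> B -> Prop) f g : is_congr +%R *%R R ->
  coef_congr iota R f g -> R (pe f) (pe g).
Proof.
move=> hR hc.
rewrite (pe_incl (f := f) (s := finsupp f `|` finsupp g)) ?fsubsetUl //.
rewrite (pe_incl (f := g) (s := finsupp f `|` finsupp g)) ?fsubsetUr //.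
apply: big_congr => // m; case: hR => r _ _ _ mu; apply: mu => //.
Qed.
End PE.

Theorem proposition3p9 (A B : comNzSemiRingType) (iota : {rmorphism A -> B})
  (iota_inj : injective iota) (n : nat)
  (rho : B -> B -> Prop) (sigma : spoly A n -> spoly A n -> Prop) :
  is_congr +%R *%R rho ->
  is_congr (@padd A n) (@pmul A n) sigma ->
  forall f g : spoly A n,
    congr_gen (@padd A n) (@pmul A n) (rad_quot iota sigma rho) f g ->
    thetaB iota (crad +%R *%R rho) (Zvar iota rho sigma) f g.
Proof.
move=> Hr Hs f g Hfg; apply: Hfg.
  have := crad_congr Hr; case=> r s t a m.
  split.
  - by move=> u P _; apply: r.
  - by move=> u v h P HP; apply: s; apply: h.
  - by move=> u v w h1 h2 P HP; apply: (t _ (peval iota v P)); [apply: h1 | apply: h2].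
  - move=> u v w x h1 h2 P HP; have E1 := pe_add iota P u w; have E2 := pe_add iota P v x.
    rewrite /pe in E1 E2; rewrite E1 E2.
    by apply: a; [apply: h1 | apply: h2].
  - move=> u v w x h1 h2 P HP; have E1 := pe_mul iota P u w; have E2 := pe_mul iota P v x.
    rewrite /pe in E1 E2; rewrite E1 E2.
    by apply: m; [apply: h1 | apply: h2].
move=> u v [g1 [g2 [[c [k [hk Hs']]] [h1 h2]]]] P HP.
case: k hk Hs' => [//|k] _ Hs'.
have CC := crad_congr Hr; case: (CC) => r s t a m.
have c1 : crad +%R *%R rho (peval iota g1 P) (peval iota g2 P).
  have H := HP _ _ Hs'.
  have E := pe_twpow iota P (padd g1 c, padd g2 c) k.
  have E1 := pe_add iota P g1 c; have E2 := pe_add iota P g2 c.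
  rewrite /pe in E E1 E2.
  exists (peval iota c P), k.+1; split => //.
  rewrite -E1 -E2 -E /=; exact: H.
have e1 := pe_coef P CC h1; have e2 := pe_coef P CC h2.
rewrite /pe in e1 e2.
apply: (t _ _ _ e1); apply: (t _ _ _ c1); exact: s.
Qed.
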